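(* Let $\mathcal{A}$ and $\mathcal{U}$ be Banach algebras and $\theta$ a nonzero character on $\mathcal{A}$. A linear mapping $T:\mathcal{A}\times_{\theta}\mathcal{U}\to\mathcal{A}\times_{\theta}\mathcal{U}$ is a multiplier if and only if there are linear mappings $R_1:\mathcal{A}\to\mathcal{A}$, $R_2:\mathcal{A}\to\mathcal{U}$, $S_1:\mathcal{U}\to\mathcal{A}$, $S_2:\mathcal{U}\to\mathcal{U}$ with $T((a,u))=(R_1(a)+S_1(u),\ R_2(a)+S_2(u))$ for all $a\in\mathcal{A},u\in\mathcal{U}$, satisfying, for all $a,a'\in\mathcal{A}$ and $u,u'\in\mathcal{U}$: (i) $R_1$ is a multiplier on $\mathcal{A}$; (ii) $aS_1(u)=S_1(u)a=0$; (iii) $\theta(a)R_2(a')=\theta(a')R_2(a)$; (iv) $\theta(a)S_2(u)=\theta(R_1(a))u+R_2(a)u=\theta(R_1(a))u+uR_2(a)$; (v) $\theta(S_1(u))u'+S_2(u)u'=\theta(S_1(u'))u+uS_2(u')$.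
   Context: The Lau product $\mathcal{A}\times_{\theta}\mathcal{U}$ is $\mathcal{A}\times\mathcal{U}$ with norm $\|(a,u)\|=\|a\|+\|u\|$ and product $(a,u)(a',u')=(aa',\theta(a)u'+\theta(a')u+uu')$. A multiplier on a Banach algebra $\mathcal{B}$ is a linear map $T:\mathcal{B}\to\mathcal{B}$ with $xT(y)=T(x)y$ for all $x,y\in\mathcal{B}$. *)

(* Defs.v *)
From HB Require Import structures.
From mathcomp Require Import all_boot all_order all_algebra.
From mathcomp Require Import all_classical all_reals all_analysis.
Set Implicit Arguments. Unset Strict Implicit. Unset Printing Implicit Defensive.
Import Order.TTheory GRing.Theory Num.Theory.
Import numFieldNormedType.Exports.
Local Open Scope ring_scope.

Definition banach_algebra (K : numFieldType) (V : completeNormedModType K)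
  (mul : V -> V -> V) : Prop :=
  [/\ (forall x y z, mul x (mul y z) = mul (mul x y) z),
      (forall k x y z, mul (k *: x + y) z = k *: mul x z + mul y z),
      (forall k x y z, mul z (k *: x + y) = k *: mul z x + mul z y)
    & (forall x y, `|mul x y| <= `|x| * `|y|)].

Definition character (K : numFieldType) (V : lmodType K)
  (mul : V -> V -> V) (theta : V -> K) : Prop :=
  [/\ (forall k x y, theta (k *: x + y) = k * theta x + theta y),
      (forall x y, theta (mul x y) = theta x * theta y)
    & exists x, theta x != 0].

Definition is_linear (K : numFieldType) (V W : lmodType K) (f : V -> W) : Prop :=
  forall k x y, f (k *: x + y) = k *: f x + f y.

Definition multiplier (V : Type) (mul : V -> V -> V) (T : V -> V) : Prop :=
  forall x y, mul x (T y) = mul (T x) y.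

Definition lau_mul (K : numFieldType) (A U : lmodType K)
  (mulA : A -> A -> A) (mulU : U -> U -> U) (theta : A -> K)
  (x y : A * U) : A * U :=
  (mulA x.1 y.1, theta x.1 *: y.2 + theta y.1 *: x.2 + mulU x.2 y.2).

Definition lau_norm (K : numFieldType) (A U : normedModType K) (x : A * U) : K :=
  `|x.1| + `|x.2|.

(* Main.v *)
Require Import Defs.
From HB Require Import structures.
From mathcomp Require Import all_boot all_order all_algebra.
From mathcomp Require Import all_classical all_reals all_analysis.
Import Order.TTheory GRing.Theory Num.Theory.
Import numFieldNormedType.Exports.
Local Open Scope ring_scope.

Section Aux.
Variables (K : numFieldType) (V : completeNormedModType K) (mul : V -> V -> V).
Hypothesis hV : banach_algebra mul.

Lemma mulDl x y z : mul (x + y) z = mul x z + mul y z.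
Proof. case: hV => _ h _ _. by have := h 1 x y z; rewrite !scale1r. Qed.
Lemma mulDr x y z : mul z (x + y) = mul z x + mul z y.
Proof. case: hV => _ _ h _. by have := h 1 x y z; rewrite !scale1r. Qed.
Lemma mul0l z : mul 0 z = 0.
Proof.
case: hV => _ h _ _. have := h (-1) z z z.
by rewrite !scaleN1r !addNr.
Qed.
Lemma mul0r z : mul z 0 = 0.
Proof.
case: hV => _ _ h _. have := h (-1) z z z.
by rewrite !scaleN1r !addNr.
Qed.
End Aux.

Lemma thD (K : numFieldType) (V : lmodType K) (mul : V -> V -> V) theta :
  character mul theta -> forall x y, theta (x + y) = theta x + theta y.
Proof. case=> h _ _ x y. by have := h 1 x y; rewrite scale1r mul1r. Qed.
Lemma th0 (K : numFieldType) (V : lmodType K) (mul : V -> V -> V) theta :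
  character mul theta -> theta 0 = 0.
Proof. case=> h _ _. have := h (-1) 0 0. rewrite scaleN1r addNr => ->. by rewrite mulN1r addNr. Qed.

Lemma rearr (V : zmodType) (p q r s t v w x y : V) :
  x + y = v + w ->
  p + (q + r) + (s + v) + (t + w) = q + x + (p + (s + t)) + (r + y).
Proof.
move=> h; rewrite !addrA [RHS](ACl (3*1*6*4*5*2*7)) /= -(addrA _ x y) h.
by rewrite [LHS](ACl (1*2*3*4*6*5*7)) /= !addrA.
Qed.

Theorem theorem3p1 (K : numFieldType)
  (A U : completeNormedModType K) (mulA : A -> A -> A) (mulU : U -> U -> U)
  (theta : A -> K)
  (hA : banach_algebra mulA) (hU : banach_algebra mulU)
  (htheta : character mulA theta)
  (T : A * U -> A * U) (hT : is_linear T) :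
  multiplier (lau_mul mulA mulU theta) T <->
  exists (R1 : A -> A) (R2 : A -> U) (S1 : U -> A) (S2 : U -> U),
    [/\ is_linear R1, is_linear R2, is_linear S1 & is_linear S2] /\
    (forall a u, T (a, u) = (R1 a + S1 u, R2 a + S2 u)) /\
    [/\ multiplier mulA R1,
        (forall a u, mulA a (S1 u) = 0 /\ mulA (S1 u) a = 0),
        (forall a a', theta a *: R2 a' = theta a' *: R2 a),
        (forall a u, theta a *: S2 u = theta (R1 a) *: u + mulU (R2 a) u /\
                     theta (R1 a) *: u + mulU (R2 a) u
                       = theta (R1 a) *: u + mulU u (R2 a)) &
        (forall u u', theta (S1 u) *: u' + mulU (S2 u) u'
                      = theta (S1 u') *: u + mulU u (S2 u'))].
Proof.
have TD : forall x y, T (x + y) = T x + T y.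
  by move=> x y; have := hT 1 x y; rewrite !scale1r.
have T0 : T 0 = 0.
  by have := hT (-1) 0 0; rewrite !scaleN1r !addNr.
have Tau : forall a u, T (a, u) = T (a, 0) + T (0, u).
  move=> a u; rewrite -TD; congr T.
  by apply/pair_equal_spec; split => /=; rewrite ?addr0 ?add0r.
have mA0l := @mul0l _ _ _ hA; have mA0r := @mul0r _ _ _ hA.
have mU0l := @mul0l _ _ _ hU; have mU0r := @mul0r _ _ _ hU.
have mADl := @mulDl _ _ _ hA; have mADr := @mulDr _ _ _ hA.
have mUDl := @mulDl _ _ _ hU; have mUDr := @mulDr _ _ _ hU.
have tD := @thD _ _ _ _ htheta; have t0 := @th0 _ _ _ _ htheta.
split.
- move=> hM.
  exists (fun a => (T (a, 0)).1), (fun a => (T (a, 0)).2),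
         (fun u => (T (0, u)).1), (fun u => (T (0, u)).2).
  split.
    split=> k x y /=.
    + have -> : (k *: x + y, 0 : U) = k *: (x, 0) + (y, 0).
        by apply/pair_equal_spec; split => //=; rewrite scaler0 addr0.
      by rewrite hT.
    + have -> : (k *: x + y, 0 : U) = k *: (x, 0) + (y, 0).
        by apply/pair_equal_spec; split => //=; rewrite scaler0 addr0.
      by rewrite hT.
    + have -> : (0 : A, k *: x + y) = k *: (0, x) + (0, y).
        by apply/pair_equal_spec; split => //=; rewrite scaler0 addr0.
      by rewrite hT.
    + have -> : (0 : A, k *: x + y) = k *: (0, x) + (0, y).
        by apply/pair_equal_spec; split => //=; rewrite scaler0 addr0.
      by rewrite hT.
  split.
    by move=> a u; rewrite Tau.
  have E := fun a u a' u' => hM (a, u) (a', u').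
  rewrite /lau_mul in E.
  split.
  + move=> a a'; have := E a 0 a' 0.
    by case/pair_equal_spec => /= ->.
  + move=> a u; split.
      have := E a 0 0 u; case/pair_equal_spec => /= -> _.
      by rewrite ?T0 /= mA0r.
    have := E 0 u a 0; case/pair_equal_spec => /= <- _.
    by rewrite ?T0 /= mA0l.
  + move=> a a'; have := E a 0 a' 0; case/pair_equal_spec => /= _.
    by rewrite !scaler0 !mU0l !mU0r !addr0 add0r.
  + move=> a u.
    have h1 : theta a *: (T (0, u)).2 = theta (T (a, 0)).1 *: u + mulU (T (a, 0)).2 u.
      have := E a 0 0 u; case/pair_equal_spec => /= _.
      by rewrite t0 scaler0 scale0r mU0l !addr0.
    have h2 : theta a *: (T (0, u)).2 = theta (T (a, 0)).1 *: u + mulU u (T (a, 0)).2.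
      have := E 0 u a 0; case/pair_equal_spec => /= _.
      by rewrite t0 scaler0 scale0r mU0r !addr0 !add0r => <-.
    by split => //; rewrite -h1 -h2.
  + move=> u u'; have := E 0 u 0 u'; case/pair_equal_spec => /= _.
    by rewrite t0 !scale0r add0r addr0 => ->.
- case=> R1 [R2] [S1] [S2] [_ [HT [H1 H2 H3 H4 H5]]].
  move=> [a u] [a' u']; rewrite /lau_mul !HT /=.
  apply/pair_equal_spec; split => /=.
    by rewrite mADr mADl H1 (proj1 (H2 _ _)) (proj2 (H2 _ _)).
  rewrite !tD !mUDr !mUDl !scalerDr !scalerDl.
  rewrite H3 (proj1 (H4 a u')) (proj1 (H4 a' u)) (proj2 (H4 a' u)).
  apply: rearr; exact: H5.
Qed.
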